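(* Let $\Gamma_M$ ($M>0$) be a family of nonatomic routing games with a single OD pair with demand $M$, sharing the same graph, path set $\mathcal P$ and edge costs $(c_e)_{e\in\mathcal E}$. Suppose there exists a path $p\in\mathcal P$ with bounded costs, i.e. $\lim_{x\to\infty}c_e(x)<\infty$ for all $e\in p$. Then $\mathrm{PoA}(\Gamma_M)\to 1$ as $M\to\infty$.
   Context: A nonatomic routing game with a single OD pair consists of a finite directed multigraph with edge set $\mathcal E$, a nonempty finite set $\mathcal P$ of paths from an origin to a destination, a demand $M>0$, and continuous nondecreasing edge costs $c_e:[0,\infty)\to[0,\infty)$. Feasible flows: $f\in\mathbb R_+^{\mathcal P}$ with $\sum_p f_p=M$; loads $x_e=\sum_{p\ni e}f_p$; path costs $c_p(f)=\sum_{e\in p}c_e(x_e)$. A Wardrop equilibrium is a feasible $f^*$ with $c_p(f^* )\le c_{p'}(f^* )$ whenever $f^*_p>0$. Social cost $L(x)=\sum_e x_ec_e(x_e)$; $\mathrm{Opt}$ is its minimum over feasible loads, $\mathrm{Eq}=L(x^* )$ at an equilibrium load, and $\mathrm{PoA}=\mathrm{Eq}/\mathrm{Opt}$; it is assumed throughout that $\mathrm{Opt}>0$ (otherwise $\mathrm{PoA}:=1$). *)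

(* Defs.v *)
From HB Require Import structures.
From mathcomp Require Import all_boot all_order all_algebra.
From mathcomp Require Import all_classical all_reals all_analysis.
Set Implicit Arguments. Unset Strict Implicit. Unset Printing Implicit Defensive.
Import Order.TTheory GRing.Theory Num.Theory.
Local Open Scope ring_scope.

Section Routing.
Variables (R : realType) (V E P : finType).
Variables (src dst : E -> V) (o d : V).

(* A (simple) o-d path in the directed multigraph (V, E, src, dst):
   a nonempty edge sequence e1 ... ek with src e1 = o, dst e_i = src e_(i+1),
   dst ek = d, and pairwise distinct visited vertices o, dst e1, ..., dst ek. *)
Definition is_od_path (s : seq E) : bool :=
  [&& s != [::],
      map src s == belast o (map dst s),
      last o (map dst s) == d &
      uniq (o :: map dst s)].

Variable pe : P -> seq E.
Variable c : E -> R -> R.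

Definition load (f : P -> R) (e : E) : R := \sum_(p : P | e \in pe p) f p.

Definition path_cost (f : P -> R) (p : P) : R := \sum_(e <- pe p) c e (load f e).

Definition social_cost (f : P -> R) : R := \sum_(e : E) load f e * c e (load f e).

Definition feasible (M : R) (f : P -> R) : Prop :=
  (forall p, 0 <= f p) /\ \sum_(p : P) f p = M.

Definition wardrop_eq (M : R) (f : P -> R) : Prop :=
  feasible M f /\ forall p p', 0 < f p -> path_cost f p <= path_cost f p'.

Definition social_opt (M : R) (f : P -> R) : Prop :=
  feasible M f /\ forall g, feasible M g -> social_cost f <= social_cost g.

(* PoA = Eq / Opt, with the convention PoA := 1 when Opt = 0 *)
Definition poa_ratio (eq opt : R) : R := if opt == 0 then 1 else eq / opt.

End Routing.

(* Main.v *)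
Require Import Defs.
From HB Require Import structures.
From mathcomp Require Import all_boot all_order all_algebra.
From mathcomp Require Import all_classical all_reals all_analysis.
From mathcomp Require Import ring lra.
Import Order.TTheory GRing.Theory Num.Theory numFieldNormedType.Exports.
Local Open Scope classical_set_scope.
Local Open Scope ring_scope.

Lemma mono_lim_bound (R : realType) (f : R -> R) l x :
  (forall x y, 0 <= x -> x <= y -> f x <= f y) -> 0 <= x ->
  f x @[x --> +oo] --> l -> f x <= l.
Proof.
move=> Hm Hx Hl; rewrite leNgt; apply/negP => Hlt.
have /filter_ex[y [H1 H2]] : \forall y \near +oo, `|l - f y| < f x - l /\ x <= y.
  near=> y; split; near: y.
    by apply: cvgr_dist_lt => //; rewrite subr_gt0.
  by apply: nbhs_pinfty_ge; rewrite num_real.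
have := Hm _ _ Hx H2.
have := ler_norm (f y - l); rewrite distrC.
lra.
Unshelve. all: end_near.
Qed.

Lemma le_sum_mem (R : realDomainType) (I : eqType) (s : seq I) (F : I -> R) x :
  (forall i, 0 <= F i) -> x \in s -> F x <= \sum_(i <- s) F i.
Proof.
move=> F0; elim: s => // a s IH; rewrite in_cons big_cons => /orP[/eqP->|/IH h].
  by rewrite lerDl sumr_ge0.
by apply: le_trans h _; rewrite lerDr.
Qed.

Lemma od_uniq (V E : finType) (src dst : E -> V) o d s :
  is_od_path src dst o d s -> uniq s.
Proof.
by case/and4P => _ _ _ /= /andP[_ /map_uniq].
Qed.

Lemma social_costE (R : realType) (E P : finType) (pe : P -> seq E)
  (c : E -> R -> R) (f : P -> R) :
  (forall p, uniq (pe p)) ->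
  social_cost pe c f = \sum_p f p * path_cost pe c f p.
Proof.
move=> Hu; rewrite /social_cost /path_cost.
under eq_bigr => e _ do rewrite {1}/load mulr_suml big_mkcond.
rewrite exchange_big; apply: eq_bigr => p _.
rewrite [in RHS]big_uniq // mulr_sumr [RHS]big_mkcond; apply: eq_bigr => e _.
by case: ifP.
Qed.

Theorem corollary4p7 (R : realType) (V E P : finType)
    (src dst : E -> V) (o d : V) (pe : P -> seq E) (c : E -> R -> R)
    (Hpaths : forall p, is_od_path src dst o d (pe p))
    (Hcont : forall e, {within [set x : R | 0 <= x], continuous (c e)})
    (Hmono : forall e x y, 0 <= x -> x <= y -> c e x <= c e y)
    (Hnneg : forall e x, 0 <= x -> 0 <= c e x)
    (Hbounded : exists p0 : P, forall e, e \in pe p0 ->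
        exists l : R, c e x @[x --> +oo] --> l) :
  forall eps : R, 0 < eps -> exists M0 : R, forall M : R, M0 < M ->
    forall fe fo : P -> R,
      wardrop_eq pe c M fe -> social_opt pe c M fo ->
      `| poa_ratio (social_cost pe c fe) (social_cost pe c fo) - 1 | < eps.
Proof.
move=> eps eps0.
have Hu : forall p, uniq (pe p) by move=> p; apply: od_uniq (Hpaths p).
have load0 : forall f : P -> R, (forall p, 0 <= f p) -> forall e, 0 <= load pe f e.
  by move=> f f0 e; rewrite /load; apply: sumr_ge0.
have sc0 : forall f : P -> R, (forall p, 0 <= f p) -> 0 <= social_cost pe c f.
  move=> f f0; rewrite /social_cost; apply: sumr_ge0 => e _; apply: mulr_ge0; first exact: load0.
  exact/Hnneg/load0.
pose bnd e : bool := `[< exists B, forall x, 0 <= x -> c e x <= B >].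
pose Sset e := [set y | exists2 x, 0 <= x & y = c e x].
pose S e := sup (Sset e).
have hasS : forall e, bnd e -> has_sup (Sset e).
  move=> e /asboolP[B HB]; split; first by exists (c e 0); exists 0.
  by exists B => y [x x0 ->]; apply: HB.
have SubS : forall e x, bnd e -> 0 <= x -> c e x <= S e.
  by move=> e x be x0; apply: (sup_upper_bound (hasS e be)); exists x.
have S0 : forall e, bnd e -> 0 <= S e.
  by move=> e be; apply: le_trans (SubS e 0 be (lexx _)); apply: Hnneg.
pose Lp p := \sum_(e <- pe p) S e.
pose bp p := all bnd (pe p).
case: Hbounded => p0 Hp0.
have bp0 : bp p0.
  apply/allP => e /Hp0 [l Hl]; apply/asboolP; exists l => x x0.
  exact: (@mono_lim_bound R (c e) l x (Hmono e) x0 Hl).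
case: (arg_minP Lp bp0) => ps bps minps.
set Ls := Lp ps.
have Ls0 : 0 <= Ls.
  rewrite /Ls /Lp big_seq. apply: sumr_ge0 => e he; apply: S0; exact: (allP bps).
have pcLs : forall f : P -> R, (forall p, 0 <= f p) -> path_cost pe c f ps <= Ls.
  move=> f f0; rewrite /path_cost /Ls /Lp big_seq [X in _ <= X]big_seq.
  apply: ler_sum => e he; apply: SubS; [exact: (allP bps) | exact: load0].
have Eqle : forall M fe, wardrop_eq pe c M fe -> social_cost pe c fe <= M * Ls.
  move=> M fe [[fe0 feM] Hw]; rewrite social_costE //.
  apply: (@le_trans _ _ (\sum_p fe p * path_cost pe c fe ps)).
    apply: ler_sum => p _; have := fe0 p; rewrite le_eqVlt => /orP[/eqP<-|fp].
      by rewrite !mul0r.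
    by apply: ler_wpM2l; [exact: ltW | exact: Hw].
  rewrite -mulr_suml feM; apply: ler_wpM2l; last exact: pcLs.
  by rewrite -feM; apply: sumr_ge0.
have [Lsz|Lspos] := eqVneq Ls 0.
  exists 0 => M _ fe fo Hfe [Hfo Hopt].
  have h1 := Eqle M fe Hfe; rewrite Lsz mulr0 in h1.
  have h2 := Hopt fe Hfe.1.
  have h3 := sc0 fo Hfo.1.
  have -> : social_cost pe c fo = 0 by apply/eqP; rewrite eq_le h3 andbT; exact: le_trans h2 h1.
  by rewrite /poa_ratio eqxx subrr normr0.
have Lsp : 0 < Ls by rewrite lt_def Lspos Ls0.
pose u := eps / 2.
have upos : 0 < u by rewrite /u divr_gt0.
pose t := u / (1 + eps).
have tpos : 0 < t by rewrite /t divr_gt0 // addr_gt0.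
have tlt1 : t < 1.
  rewrite /t ltr_pdivrMr ?addr_gt0 // mul1r /u; lra.
pose D := Ls * t.
have Dpos : 0 < D by rewrite /D mulr_gt0.
have LsD : 0 < Ls - D.
  rewrite subr_gt0 /D -{2}(mulr1 Ls) ltr_pM2l //.
pose n : R := #|E|%:R.
have n0 : 0 <= n by rewrite /n ler0n.
pose dl := D / (n + 1).
have dlpos : 0 < dl by rewrite /dl divr_gt0 // ltr_wpDl.
pose B := Ls + 1.
have thr : forall e, exists K, 0 <= K /\ forall x, K <= x ->
    (bnd e -> S e - dl <= c e x) /\ (~~ bnd e -> B <= c e x).
  move=> e; case be: (bnd e).
    have [y [x x0 ->] hy] := sup_adherent dlpos (hasS e be).
    exists x; split => // z xz; split => // _.
    exact: le_trans (ltW hy) (Hmono e x z x0 xz).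
  case: (pselect (exists x, 0 <= x /\ B < c e x)) => [[x [x0 hx]]|nx].
    exists x; split => // z xz; split => // _.
    exact: le_trans (ltW hx) (Hmono _ _ _ x0 xz).
  exfalso; move/negbT: be => /negP; apply; apply/asboolP; exists B => x x0.
  rewrite leNgt; apply/negP => hx; apply: nx; by exists x.
have [Kf HKf] := choice thr.
pose K := \sum_e Kf e.
have KfK : forall e, Kf e <= K.
  move=> e; apply: le_sum_mem; [move=> i; exact: (HKf i).1 | exact: mem_index_enum].
have K0 : 0 <= K by apply: sumr_ge0 => e _; exact: (HKf e).1.
pose A := #|P|%:R * K.
have A0 : 0 <= A by rewrite /A mulr_ge0 // ler0n.
exists (A / u + A) => M HM fe fo Hfe [Hfo Hopt].
set Eq := social_cost pe c fe; set Op := social_cost pe c fo.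
have EqM := Eqle M fe Hfe.
have OpEq : Op <= Eq := Hopt fe Hfe.1.
have [fo0 foM] := Hfo.
have Opge : (M - A) * (Ls - D) <= Op.
  pose H p := all (fun e => K <= load pe fo e) (pe p).
  have pcH : forall p, H p -> Ls - D <= path_cost pe c fo p.
    move=> p Hp; case bpp: (bp p).
      apply: (@le_trans _ _ (Lp p - D)); first by rewrite lerB //; exact: minps.
      rewrite /Lp /path_cost.
      apply: (@le_trans _ _ (\sum_(e <- pe p) (S e - dl))).
        rewrite sumrB lerB // big_uniq // sumr_const -mulr_natr.
        apply: (@le_trans _ _ (dl * n)).
          by apply: ler_wpM2l; [exact: ltW | rewrite /n ler_nat max_card].
        rewrite /dl mulrAC ler_pdivrMr ?ltr_wpDl //; apply: ler_wpM2l.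
          exact: ltW.
        by rewrite lerDl.
      rewrite big_seq [X in _ <= X]big_seq; apply: ler_sum => e he.
      have be := allP bpp e he.
      have hl := allP Hp e he.
      exact: ((HKf e).2 _ (le_trans (KfK e) hl)).1 be.
    have /allPn[e he nbe] : ~~ all bnd (pe p) by rewrite -/(bp p) bpp.
    apply: (@le_trans _ _ B); first by rewrite /B; lra.
    apply: (@le_trans _ _ (c e (load pe fo e))).
      exact: ((HKf e).2 _ (le_trans (KfK e) (allP Hp e he))).2 nbe.
    rewrite /path_cost; apply: (@le_sum_mem _ _ (pe p) (fun e => c e (load pe fo e)) e) => //.
    by move=> i; apply: Hnneg; apply: load0.
  have fonH : forall p, ~~ H p -> fo p <= K.
    move=> p /allPn[e he]; rewrite -ltNge => hlt; apply: le_trans (ltW hlt).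
    rewrite /load big_mkcond /=.
    have := @le_sum_mem _ _ (index_enum P)
      (fun q => if e \in pe q then fo q else 0) p _ (mem_index_enum p).
    rewrite he; apply => q; case: ifP => // _; exact: fo0.
  rewrite /Op social_costE //.
  apply: (@le_trans _ _ (\sum_p (if H p then fo p * (Ls - D) else 0))); last first.
    apply: ler_sum => p _; case: ifP => hp.
      by apply: ler_wpM2l; [exact: fo0 | exact: pcH].
    apply: mulr_ge0 (fo0 p) _; rewrite /path_cost; apply: sumr_ge0 => e _.
    by apply: Hnneg; apply: load0.
  have -> : \sum_p (if H p then fo p * (Ls - D) else 0) =
      (\sum_p (if H p then fo p else 0)) * (Ls - D).
    by rewrite mulr_suml; apply: eq_bigr => p _; case: (H p); rewrite ?mul0r.
  apply: ler_wpM2r; first exact: ltW.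
  have hs : \sum_p fo p = \sum_p (if H p then fo p else 0) +
      \sum_p (if ~~ H p then fo p else 0).
    by rewrite -big_split; apply: eq_bigr => p _; case: (H p) => /=; rewrite ?addr0 ?add0r.
  have hn : \sum_p (if ~~ H p then fo p else 0) <= A.
    apply: (@le_trans _ _ (\sum_(p : P) K)).
      by apply: ler_sum => p _; case: ifP => [/fonH //| _].
    by rewrite sumr_const /A mulr_natl.
  move: hs; rewrite foM; lra.
have MA : A < M.
  apply: le_lt_trans HM; rewrite lerDr; apply: divr_ge0 => //; exact: ltW.
have Opos : 0 < Op.
  apply: lt_le_trans Opge; apply: mulr_gt0 => //; by rewrite subr_gt0.
rewrite /poa_ratio (gt_eqF Opos).
have ge1 : 1 <= Eq / Op by rewrite ler_pdivlMr // mul1r.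
rewrite ger0_norm ?subr_ge0 // ltrBlDr ltr_pdivrMr //.
have e1 : (eps + 1) * ((M - A) * (Ls - D)) = Ls * ((1 + u) * (M - A)).
  rewrite /D /t /u; field.
  by rewrite gt_eqF // addr_gt0.
have hA : A / u * u = A by rewrite divfK // gt_eqF.
have e2 : M < (1 + u) * (M - A).
  have : u * (A / u + A) < u * M by rewrite ltr_pM2l.
  rewrite mulrDr [u * (A / u)]mulrC hA; nra.
apply: le_lt_trans EqM _.
apply: (@lt_le_trans _ _ ((eps + 1) * ((M - A) * (Ls - D)))).
  by rewrite e1 [M * Ls]mulrC ltr_pM2l.
by apply: ler_wpM2l => //; rewrite addr_ge0 // ltW.
Qed.
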